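(* Let $q\ge2$ be a prime power, $d\ge6$, $2\le j\le d$ and $1\le i\le d-3$, and let $h_{\max}=\min\{j,d-i\}$. Then $$|Q_j(i)-T_{h_{\max}}(i,j)|\le\begin{cases}|T_0(i,j)|+|T_1(i,j)|+\dots+|T_{j-1}(i,j)|, & \text{if } j\le d-i-1,\\ |T_{d-i-2}(i,j)|+|T_{d-i-1}(i,j)|, & \text{if } j\ge d-i.\end{cases}$$
   Context: Let $b=-q$. For integers $m\ge0$ and $l$, ${m\brack l}_b=\prod_{t=1}^{l}\frac{b^{m-t+1}-1}{b^t-1}$ for $l\ge0$ and $0$ for $l<0$. For $0\le i,j\le d$, $$Q_j(i)=\sum_{h=0}^{\min\{j,d-i\}}(-1)^j(-q)^{\binom{j-h}{2}+hd}{d-h\brack d-j}_b{d-i\brack h}_b,$$ the eigenvalues of the Hermitian forms graph $Q_q(d,j)$. $T_h(i,j)$ denotes the $h$-th summand (including the factor $(-1)^j$). *)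

(* Defs.v *)
From mathcomp Require Import all_boot all_order all_algebra.
Set Implicit Arguments. Unset Strict Implicit. Unset Printing Implicit Defensive.
Import Order.TTheory GRing.Theory Num.Theory.
Local Open Scope ring_scope.

Definition prime_power (q : nat) : Prop :=
  exists p k : nat, [/\ prime p, (0 < k)%N & q = (p ^ k)%N].

(* Gaussian binomial [m l]_b for l >= 0 (the case l < 0, where it is 0,
   never occurs below), computed in rat:
   prod_{t=1}^{l} (b^(m-t+1) - 1) / (b^t - 1).
   The exponent m - t + 1 is written (m.+1 - t) so that it is exact for
   t <= m+1; for t > m+1 the product already contains the zero factor
   at t = m+1. *)
Definition gbin (b : rat) (m l : nat) : rat :=
  \prod_(1 <= t < l.+1) ((b ^+ (m.+1 - t) - 1) / (b ^+ t - 1)).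

(* h-th summand T_h(i,j) of Q_j(i), including the factor (-1)^j, b = -q *)
Definition Tterm (q d i j h : nat) : rat :=
  (-1) ^+ j * (- (q%:R : rat)) ^+ ('C(j - h, 2) + h * d)%N
  * gbin (- (q%:R)) (d - h) (d - j) * gbin (- (q%:R)) (d - i) h.

Definition Qeig (q d i j : nat) : rat :=
  \sum_(0 <= h < (minn j (d - i)).+1) Tterm q d i j h.

(* Main.v *)
Require Import Defs.
From mathcomp Require Import all_boot all_order all_algebra.
From mathcomp Require Import ring lra zify.
Import Order.TTheory GRing.Theory Num.Theory.
Local Open Scope ring_scope.

Lemma gbinS (b : rat) m l :
  gbin b m l.+1 = gbin b m l * ((b ^+ (m - l) - 1) / (b ^+ l.+1 - 1)).
Proof. by rewrite /gbin big_nat_recr //= subSS. Qed.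

Lemma gbin_up (b : rat) m l : (l <= m)%N ->
  gbin b m.+1 l * (b ^+ (m.+1 - l) - 1) = gbin b m l * (b ^+ m.+1 - 1).
Proof.
elim: l => [|l IH] hl.
  by rewrite /gbin !big_geq // subn0.
have IH' := IH (ltnW hl).
rewrite !gbinS subSS.
transitivity ((gbin b m.+1 l * (b ^+ (m.+1 - l) - 1)) *
   ((b ^+ (m - l) - 1) / (b ^+ l.+1 - 1))); first by ring.
rewrite IH'; ring.
Qed.

Lemma bk (x : rat) k : (-x) ^+ k - 1 = (-1) ^+ k * (x ^+ k - (-1) ^+ k).
Proof.
have : ((-1) ^+ k = 1 :> rat) \/ (-1) ^+ k = -1 :> rat.
  by rewrite -(signr_odd rat k); case: (odd k); [right|left]; rewrite ?expr1 ?expr0.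
by rewrite (exprNn x); case=> ->; ring.
Qed.

Lemma sign_cases k : ((-1) ^+ k = 1 :> rat) \/ (-1) ^+ k = -1 :> rat.
Proof. by rewrite -(signr_odd rat k); case: (odd k); [right|left]; rewrite ?expr1 ?expr0. Qed.

Lemma pk_bounds (x : rat) k : 2 <= x -> (0 < k)%N ->
  [/\ 0 < x ^+ k - (-1) ^+ k, x ^+ k - 1 <= x ^+ k - (-1) ^+ k
    & x ^+ k - (-1) ^+ k <= x ^+ k + 1].
Proof.
move=> hx; case: k => // k _.
have h1 : 1 <= x ^+ k by apply: exprn_ege1; lra.
have h2 : 2 <= x ^+ k.+1 by rewrite exprS; nra.
by case: (sign_cases k.+1) => ->; split; lra.
Qed.

Lemma bk_norm (x : rat) k : 2 <= x -> (0 < k)%N ->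
  `|(-x) ^+ k - 1| = x ^+ k - (-1) ^+ k.
Proof.
move=> hx hk; have [h _ _] := pk_bounds x k hx hk.
by rewrite bk normrM normr_sign mul1r ger0_norm // ltW.
Qed.

Lemma bk_neq0 (x : rat) k : 2 <= x -> (0 < k)%N -> (-x) ^+ k - 1 != 0.
Proof.
move=> hx hk; rewrite -normr_gt0 bk_norm //; by case: (pk_bounds x k hx hk).
Qed.

Lemma q2 (q : nat) : (2 <= q)%N -> 2 <= (q%:R : rat).
Proof. by move=> h; rewrite (ler_nat rat 2 q). Qed.

Lemma Tterm_rec q d i j h : (h < d - i)%N -> (d - i <= j)%N -> (j <= d)%N ->
  (2 <= q)%N ->
  Tterm q d i j h.+1 * (((- (q%:R : rat)) ^+ (d - h) - 1) * ((- (q%:R : rat)) ^+ h.+1 - 1)) =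
  Tterm q d i j h * ((- (q%:R : rat)) ^+ (d - j + h.+1) * ((- (q%:R : rat)) ^+ (j - h) - 1)
                    * ((- (q%:R : rat)) ^+ (d - i - h) - 1)).
Proof.
move=> hh hn hj hq.
rewrite /Tterm.
set b := - (q%:R : rat).
have H1 : gbin b (d - h.+1) (d - j) * (b ^+ (d - h) - 1) =
          gbin b (d - h) (d - j) * (b ^+ (j - h) - 1).
  have := gbin_up b (d - h.+1) (d - j) ltac:(lia).
  have e1 : (d - h.+1).+1 = (d - h)%N by lia.
  have e2 : (d - h - (d - j) = j - h)%N by lia.
  by rewrite e1 e2 => ->.
have H2 : gbin b (d - i) h.+1 * (b ^+ h.+1 - 1) = gbin b (d - i) h * (b ^+ (d - i - h) - 1).
  by rewrite gbinS mulrA divfK // bk_neq0 // q2.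
have H3 : b ^+ ('C(j - h.+1, 2) + h.+1 * d) =
          b ^+ ('C(j - h, 2) + h * d) * b ^+ (d - j + h.+1).
  rewrite -exprD; congr (_ ^+ _).
  have -> : (j - h = (j - h.+1).+1)%N by lia.
  rewrite binS bin1; lia.
rewrite H3.
transitivity ((-1) ^+ j * b ^+ ('C(j - h, 2) + h * d) * b ^+ (d - j + h.+1) *
  (gbin b (d - h.+1) (d - j) * (b ^+ (d - h) - 1)) *
  (gbin b (d - i) h.+1 * (b ^+ h.+1 - 1))); first by ring.
rewrite H1 H2; ring.
Qed.
Lemma core (P E X Y u v w z : rat) : 1 <= P -> 2 <= E -> 8 <= X -> 8 <= Y ->
  X - 1 <= u -> Y - 1 <= v -> 0 <= w -> w <= P * X + 1 -> 0 <= z -> z <= E + 1 ->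
  2 * (w * z) <= P * E * u * v.
Proof.
move=> hP hE hX hY hu hv hw0 hw hz0 hz.
have h1 : w * z <= (P * X + 1) * (E + 1) by apply: ler_pM.
have h2 : P * E * (X - 1) * (Y - 1) <= P * E * u * v.
  have hPE : 0 <= P * E by apply: mulr_ge0; lra.
  have a1 : P * E * (X - 1) * (Y - 1) <= P * E * (X - 1) * v.
    apply: ler_wpM2l; [apply: mulr_ge0|]; lra.
  have a2 : P * E * (X - 1) * v <= P * E * u * v.
    apply: ler_wpM2r; [lra|]; apply: ler_wpM2l; lra.
  lra.
have h3 : 2 * ((P * X + 1) * (E + 1)) <= P * E * (X - 1) * (Y - 1).
  have h4 : 7 * (P * E * (X - 1)) <= P * E * (X - 1) * (Y - 1).
    have hp : 0 < P * E * (X - 1).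
      apply: mulr_gt0; [apply: mulr_gt0|]; lra.
    have : 0 <= P * E * (X - 1) * (Y - 8) by apply: mulr_ge0; lra.
    nra.
  have hPE : 0 <= P * E by apply: mulr_ge0; lra.
  have hPX : 0 <= P * X by apply: mulr_ge0; lra.
  have : 0 <= (P * E) * (X - 8) by apply: mulr_ge0; lra.
  have : 0 <= (P * X) * (E - 2) by apply: mulr_ge0; lra.
  have : 0 <= (P - 1) * E by apply: mulr_ge0; lra.
  nra.
nra.
Qed.
Lemma x8 (x : rat) k : 2 <= x -> (3 <= k)%N -> 8 <= x ^+ k.
Proof.
move=> hx hk; have -> : k = ((k - 3) + 3)%N by lia.
rewrite exprD; have h1 : 1 <= x ^+ (k - 3) by apply: exprn_ege1; lra.
have h3 : 8 <= x ^+ 3 by rewrite !exprS expr0; nra.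
nra.
Qed.

Lemma sign_even m : (-1) ^+ (m + m)%N = 1 :> rat.
Proof. by rewrite -(signr_odd rat) oddD addbb expr0. Qed.

Lemma ND_sign q d i j h : (h < d - i)%N -> (d - i <= j)%N -> (j <= d)%N ->
  (2 <= q)%N ->
  0 < (-1) ^+ (d - i - h) *
   (((- (q%:R : rat)) ^+ (d - j + h.+1) * ((- (q%:R : rat)) ^+ (j - h) - 1) * ((- (q%:R : rat)) ^+ (d - i - h) - 1)) *
    (((- (q%:R : rat)) ^+ (d - h) - 1) * ((- (q%:R : rat)) ^+ h.+1 - 1))).
Proof.
move=> hh hn hj hq; set x := (q%:R : rat).
have hx : 2 <= x by apply: q2.
rewrite !bk (exprNn x).
have [pa _ _] := pk_bounds x (j - h) hx ltac:(lia).
have [pc _ _] := pk_bounds x (d - i - h) hx ltac:(lia).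
have [pe _ _] := pk_bounds x (d - h) hx ltac:(lia).
have [pf _ _] := pk_bounds x h.+1 hx ltac:(lia).
have px : 0 < x ^+ (d - j + h.+1) by apply: exprn_gt0; lra.
set s := (-1) ^+ (d - i - h) * (-1) ^+ (d - j + h.+1) * (-1) ^+ (j - h) *
   (-1) ^+ (d - i - h) * (-1) ^+ (d - h) * (-1) ^+ h.+1 : rat.
have hs : s = 1.
  rewrite /s -!exprD.
  have -> : ((d - i - h) + (d - j + h.+1) + (j - h) + (d - i - h) + (d - h) + h.+1 =
     ((d - i - h) + d.+1) + ((d - i - h) + d.+1))%N by lia.
  exact: sign_even.
set A := x ^+ (d - j + h.+1). set pa' := x ^+ (j - h) - _.
set pc' := x ^+ (d - i - h) - _. set pe' := x ^+ (d - h) - _. set pf' := x ^+ h.+1 - _.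
rewrite (_ : _ * _ = s * (A * pa' * pc' * (pe' * pf'))); last by rewrite /s; ring.
rewrite hs mul1r; apply: mulr_gt0; [apply: mulr_gt0; [apply: mulr_gt0|]|apply: mulr_gt0]; by [].
Qed.

Lemma ND_mag q d i j h : (h + 3 <= d - i)%N -> (d - i < d)%N -> (d - i <= j)%N ->
  (j <= d)%N -> (2 <= q)%N ->
  2 * `|((- (q%:R : rat)) ^+ (d - h) - 1) * ((- (q%:R : rat)) ^+ h.+1 - 1)| <=
  `|(- (q%:R : rat)) ^+ (d - j + h.+1) * ((- (q%:R : rat)) ^+ (j - h) - 1)
                    * ((- (q%:R : rat)) ^+ (d - i - h) - 1)|.
Proof.
move=> hh hn hnj hj hq; set x := (q%:R : rat).
have hx : 2 <= x by apply: q2.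
rewrite !normrM normrX normrN (ger0_norm (x := x)); last by lra.
rewrite !bk_norm //; try lia.
have [_ a1 _] := pk_bounds x (j - h) hx ltac:(lia).
have [_ c1 _] := pk_bounds x (d - i - h) hx ltac:(lia).
have [e0 _ e1] := pk_bounds x (d - h) hx ltac:(lia).
have [f0 _ f1] := pk_bounds x h.+1 hx ltac:(lia).
move: a1 c1 e0 e1 f0 f1.
set u := x ^+ (j - h) - (-1) ^+ (j - h). set v := x ^+ (d - i - h) - (-1) ^+ (d - i - h).
set w := x ^+ (d - h) - (-1) ^+ (d - h). set z := x ^+ h.+1 - (-1) ^+ h.+1.
have -> : x ^+ (d - j + h.+1) = x ^+ (d - j) * x ^+ h.+1 by rewrite exprD.
have -> : x ^+ (d - h) = x ^+ (d - j) * x ^+ (j - h).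
  by rewrite -exprD; congr (_ ^+ _); lia.
move=> a1 c1 e0 e1 f0 f1.
have hX : 8 <= x ^+ (j - h) by apply: x8 => //; lia.
have hY : 8 <= x ^+ (d - i - h) by apply: x8 => //; lia.
have hE : 2 <= x ^+ h.+1.
  have : 1 <= x ^+ h by apply: exprn_ege1; lra.
  rewrite exprS; nra.
have hP : 1 <= x ^+ (d - j) by apply: exprn_ege1; lra.
have [_ a1' _] := pk_bounds x (j - h) hx ltac:(lia).
have [_ c1' _] := pk_bounds x (d - i - h) hx ltac:(lia).
apply: (core (x ^+ (d - j)) (x ^+ h.+1) (x ^+ (j - h)) (x ^+ (d - i - h))); by [|lra].
Qed.

Lemma rho_neg (N D : rat) : D != 0 -> N * D < 0 -> 2 * `|D| <= `|N| -> N / D <= -2.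
Proof.
move=> D0 ND hN; case: (ltgtP D 0) => [Dn|Dp|De]; last by rewrite De eqxx in D0.
- have Np : 0 < N by nra.
  rewrite (ltr0_norm Dn) (gtr0_norm Np) in hN; rewrite ler_ndivrMr //; lra.
- have Nn : N < 0 by nra.
  rewrite (gtr0_norm Dp) (ltr0_norm Nn) in hN; rewrite ler_pdivrMr //; lra.
Qed.

Lemma rho_pos (N D : rat) : D != 0 -> 0 < N * D -> 0 <= N / D.
Proof.
move=> D0 ND; have -> : N / D = (N * D) / (D * D) by field.
apply: divr_ge0; first lra.
by rewrite -expr2 sqr_ge0.
Qed.

Lemma combine (R t B C r1 r2 : rat) : B = t * r1 -> C = B * r2 -> r1 <= -2 ->
  0 <= r2 -> `|R| <= `|t| -> `|R + t + B + C| <= `|B| + `|C|.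
Proof.
move=> -> -> h1 h2 hR.
have e : R + t + t * r1 + t * r1 * r2 = R + t * (1 - (- r1 * (1 + r2))) by ring.
have e2 : `|t * r1| + `|t * r1 * r2| = `|t| * (- r1 * (1 + r2)).
  rewrite !normrM (ler0_norm (x := r1)) ?(ger0_norm (x := r2)); [ring|lra|lra].
rewrite e e2; apply: le_trans (ler_normD _ _) _.
have hK : 2 <= - r1 * (1 + r2) by nra.
rewrite normrM (ler0_norm (x := 1 - _)); last by lra.
have := normr_ge0 t; nra.
Qed.

Lemma geo (T : nat -> rat) m : (forall h, (h < m)%N -> 2 * `|T h| <= `|T h.+1|) ->
  forall k, (k <= m)%N -> \sum_(0 <= h < k) `|T h| <= `|T k|.
Proof.
move=> hs; elim=> [|k IH] hk; first by rewrite big_geq.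
rewrite big_nat_recr //=.
have := IH (ltnW hk); have := hs k hk; lra.
Qed.

Definition Nn (q d i j h : nat) : rat :=
  (- (q%:R : rat)) ^+ (d - j + h.+1) * ((- (q%:R : rat)) ^+ (j - h) - 1)
                    * ((- (q%:R : rat)) ^+ (d - i - h) - 1).
Definition Dn (q d h : nat) : rat :=
  ((- (q%:R : rat)) ^+ (d - h) - 1) * ((- (q%:R : rat)) ^+ h.+1 - 1).

Lemma Dn_neq0 q d h : (h < d)%N -> (2 <= q)%N -> Dn q d h != 0.
Proof. by move=> hh hq; rewrite /Dn mulf_neq0 // bk_neq0 ?q2 // subn_gt0. Qed.

Lemma Tstep q d i j h : (h < d - i)%N -> (d - i <= j)%N -> (j <= d)%N -> (2 <= q)%N ->
  Tterm q d i j h.+1 = Tterm q d i j h * (Nn q d i j h / Dn q d h).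
Proof.
move=> hh hn hj hq.
have D0 : Dn q d h != 0 by apply: Dn_neq0 => //; lia.
by rewrite mulrA -(Tterm_rec q d i j h hh hn hj hq) -/(Dn q d h) mulfK.
Qed.

Lemma Tmag q d i j h : (h + 3 <= d - i)%N -> (d - i < d)%N -> (d - i <= j)%N ->
  (j <= d)%N -> (2 <= q)%N ->
  2 * `|Tterm q d i j h| <= `|Tterm q d i j h.+1|.
Proof.
move=> hh hn hnj hj hq.
have D0 : Dn q d h != 0 by apply: Dn_neq0 => //; lia.
have hD : 0 < `|Dn q d h| by rewrite normr_gt0.
rewrite -(ler_pM2r hD) (Tstep q d i j h ltac:(lia) hnj hj hq) [`|Tterm _ _ _ _ _ * _|]normrM normf_div.
have e : `|Nn q d i j h| / `|Dn q d h| * `|Dn q d h| = `|Nn q d i j h| by rewrite divfK ?normr_eq0.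
rewrite -[X in _ <= X]mulrA e.
have := ND_mag q d i j h hh hn hnj hj hq; rewrite -/(Dn q d h) -/(Nn q d i j h) => hm.
have := normr_ge0 (Tterm q d i j h); nra.
Qed.

Lemma sign3 : (-1) ^+ 3 = -1 :> rat.
Proof. by rewrite -(signr_odd rat 3) /= expr1. Qed.
Lemma sign2 : (-1) ^+ 2 = 1 :> rat.
Proof. by rewrite -(signr_odd rat 2) /= expr0. Qed.

Theorem lemma5p3 (q d i j : nat) :
  prime_power q -> (2 <= q)%N -> (6 <= d)%N ->
  (2 <= j <= d)%N -> (1 <= i <= d - 3)%N ->
  `| Qeig q d i j - Tterm q d i j (minn j (d - i)) | <=
  (if (j <= d - i - 1)%N
   then \sum_(0 <= h < j) `| Tterm q d i j h |
   else `| Tterm q d i j (d - i - 2) | + `| Tterm q d i j (d - i - 1) |).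
Proof.
move=> _ hq hd /andP[hj2 hjd] /andP[hi1 hid].
rewrite /Qeig; case: ifP => hc.
  have -> : minn j (d - i) = j by apply/minn_idPl; lia.
  by rewrite big_nat_recr //= addrK; apply: ler_norm_sum.
have hn : minn j (d - i) = (d - i)%N by apply/minn_idPr; lia.
rewrite hn big_nat_recr //= addrK.
pose m := (d - i - 3)%N.
have en : (d - i = m.+3)%N by rewrite /m; lia.
have e2 : (d - i - 2 = m.+1)%N by rewrite /m; lia.
have e1 : (d - i - 1 = m.+2)%N by rewrite /m; lia.
rewrite e2 e1 {1}en !big_nat_recr //=.
have hnj : (d - i <= j)%N by lia.
apply: (combine _ _ _ _ (Nn q d i j m / Dn q d m) (Nn q d i j m.+1 / Dn q d m.+1)).
- apply: Tstep => //; lia.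
- apply: Tstep => //; lia.
- apply: rho_neg; first by apply: Dn_neq0 => //; lia.
    have := ND_sign q d i j m ltac:(lia) hnj hjd hq.
    rewrite -/(Dn q d m) -/(Nn q d i j m).
    have -> : (d - i - m = 3)%N by rewrite /m; lia.
    rewrite sign3; lra.
  apply: (ND_mag q d i j m); lia.
- apply: rho_pos; first by apply: Dn_neq0 => //; lia.
  have := ND_sign q d i j m.+1 ltac:(lia) hnj hjd hq.
  rewrite -/(Dn q d m.+1) -/(Nn q d i j m.+1).
  have -> : (d - i - m.+1 = 2)%N by rewrite /m; lia.
  rewrite sign2; lra.
- apply: le_trans (ler_norm_sum _ _ _) _.
  apply: (geo (Tterm q d i j) m) => // h hh.
  apply: Tmag => //; lia.
Qed.
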